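(* Let $V$ be a finite-dimensional real vector space, $M$ a smooth manifold, $f\colon M\to V$ a smooth function, and $x_1,\ldots,x_m$ points of $M$ such that $0$ lies in the interior of the convex hull of $f(x_1),\ldots,f(x_m)$ and \[V=df_{x_1}T_{x_1}(M)+\cdots+df_{x_m}T_{x_m}(M).\] Then, for all $n$ sufficiently large, there exist $z_1,\ldots,z_n\in M$ such that $\sum_{i=1}^n f(z_i)=0$ and \[V=df_{z_1}T_{z_1}(M)+\cdots+df_{z_n}T_{z_n}(M).\]
   Context: Here $df_x\colon T_x(M)\to V$ denotes the differential of $f$ at $x$. *)

(* Defs.v *)
From HB Require Import structures.
From mathcomp Require Import all_boot all_order all_algebra.
From mathcomp Require Import all_classical all_reals all_analysis.
Set Implicit Arguments. Unset Strict Implicit. Unset Printing Implicit Defensive.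
Import Order.TTheory GRing.Theory Num.Theory.
Import numFieldNormedType.Exports.
Local Open Scope classical_set_scope.
Local Open Scope ring_scope.

Section Defs.
Variable R : realType.

Fixpoint iter_dd (U W : normedModType R) (vs : seq U) (g : U -> W) : U -> W :=
  match vs with
  | [::] => g
  | v :: vs' => fun x => 'D_v (iter_dd vs' g) x
  end.

Definition smooth_on (U W : normedModType R) (A : set U) (g : U -> W) : Prop :=
  open A /\
  forall vs : seq U, forall x, A x ->
    {for x, continuous (iter_dd vs g)} /\ forall v, derivable (iter_dd vs g) x v.

Record smooth_manifold (M : topologicalType) (k : nat) := SmoothManifold {
  chart_idx : Type;
  chart_dom : chart_idx -> set M;
  chart : chart_idx -> M -> 'rV[R]_k;
  chart_inv : chart_idx -> 'rV[R]_k -> M;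
  man_hausdorff : hausdorff_space M;
  man_second_countable : @second_countable M;
  chart_dom_open : forall c, open (chart_dom c);
  chart_cover : forall x : M, exists c, chart_dom c x;
  chart_img_open : forall c, open (chart c @` chart_dom c);
  chartK : forall c x, chart_dom c x -> chart_inv c (chart c x) = x;
  chart_invK : forall c y, (chart c @` chart_dom c) y ->
    chart_dom c (chart_inv c y) /\ chart c (chart_inv c y) = y;
  chart_cont : forall c x, chart_dom c x -> {for x, continuous (chart c)};
  chart_inv_cont : forall c y, (chart c @` chart_dom c) y ->
    {for y, continuous (chart_inv c)};
  chart_trans_smooth : forall c c',
    smooth_on (chart c @` (chart_dom c `&` chart_dom c'))
              (chart c' \o chart_inv c)
}.

Arguments chart_dom {M k} s c.
Arguments chart {M k} s c.
Arguments chart_inv {M k} s c.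

Variables (M : topologicalType) (k : nat) (A : smooth_manifold M k).

Definition smooth_map (W : normedModType R) (f : M -> W) : Prop :=
  forall c, smooth_on (chart A c @` chart_dom A c) (f \o chart_inv A c).

(* df_x T_x(M): the image of the differential of f at x, computed in a chart
   around x as the set of directional derivatives of f o chart^-1. *)
Definition dimage (W : normedModType R) (f : M -> W) (x : M) : set W :=
  [set w | exists c, chart_dom A c x /\
     exists v : 'rV[R]_k, w = 'D_v (f \o chart_inv A c) (chart A c x)].

Definition dimages_span (d m : nat) (f : M -> 'rV[R]_d) (x : 'I_m -> M) : Prop :=
  forall w : 'rV[R]_d, exists ws : 'I_m -> 'rV[R]_d,
    (forall i, dimage f (x i) (ws i)) /\ w = \sum_(i < m) ws i.

End Defs.

Definition conv_hull (R : realType) (d m : nat) (p : 'I_m -> 'rV[R]_d)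
  : set 'rV[R]_d :=
  [set y | exists l : 'I_m -> R, (forall i, 0 <= l i) /\
     \sum_(i < m) l i = 1 /\ y = \sum_(i < m) l i *: p i].

(* Main.v *)
Require Import Defs.
From HB Require Import structures.
From mathcomp Require Import all_boot all_order all_algebra.
From mathcomp Require Import all_classical all_reals all_analysis.
From mathcomp Require Import ring lra zify.
Import Order.TTheory GRing.Theory Num.Theory.
Import numFieldNormedType.Exports.
Local Open Scope classical_set_scope.
Local Open Scope ring_scope.

Definition rVc (R : realType) (d : nat) := 'rV[R]_d.
HB.instance Definition _ (R : realType) (d : nat) := NormedModule.copy (rVc R d) 'rV[R]_d.
HB.instance Definition _ (R : realType) (d : nat) := Complete.copy (rVc R d) 'rV[R]_d.

Section S.
Variable R : realType.
Lemma mx_norm_leP (a b : nat) (x : 'M[R]_(a,b)) e : 0 <= e ->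
  (forall i j, `|x i j| <= e) -> `|x| <= e.
Proof.
move=> e0 H; rewrite [leLHS]/Num.norm /= mx_normrE.
by apply/bigmax_leP; split => // -[i j] _; apply: H.
Qed.
Lemma mx_coord_le (a b : nat) (x : 'M[R]_(a,b)) i j : `|x i j| <= `|x|.
Proof.
rewrite [leRHS]/Num.norm /= mx_normrE.
by apply/bigmax_geP; right; exists (i, j).
Qed.
Lemma deriv_line (U W : normedModType R) (F : U -> W) (y v : U) (t : R) :
  derivable F (y + t *: v) v ->
  is_derive t 1 (fun s : R => F (y + s *: v)) ('D_v F (y + t *: v)).
Proof.
move=> dF.
have E : (fun h : R => h^-1 *: (((fun s : R => F (y + s *: v)) \o shift t) (h *: 1)
              - F (y + t *: v))) =
         (fun h : R => h^-1 *: ((F \o shift (y + t *: v)) (h *: v) - F (y + t *: v))).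
  apply/funext => h /=.
  by rewrite /shift /= [h *: 1]mulr1 scalerDl addrCA addrC.
split; rewrite /derivable /derive; rewrite E //.
Qed.

Lemma is_derive_coord (a b : nat) (G : R -> 'M[R]_(a,b)) (t : R) (dG : 'M[R]_(a,b)) (i : 'I_a) (j : 'I_b) :
  is_derive t 1 G dG -> is_derive t 1 (fun s => G s i j) (dG i j).
Proof.
move=> [dGt <-].
have E : (fun h : R => h^-1 *: (((fun s => G s i j) \o shift t) (h *: 1) - G t i j)) =
   (fun M : 'M[R]_(a,b) => M i j) \o
   (fun h : R => h^-1 *: ((G \o shift t) (h *: 1) - G t)).
  by apply/funext => h /=; rewrite !mxE.
have C : (fun h : R => h^-1 *: (((fun s => G s i j) \o shift t) (h *: 1) - G t i j))
   @ 0^' --> ('D_1 G t) i j.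
  rewrite E; apply: continuous_cvg; first exact: coord_continuous.
  exact: dGt.
split; first by apply/cvg_ex; eexists; exact: C.
exact: cvg_lim C.
Qed.

Lemma lip1 (k d : nat) (F : 'rV[R]_k -> 'rV[R]_d) (U : set 'rV[R]_k)
  (y v : 'rV[R]_k) (q : R) :
  open U -> U y -> (forall x, U x -> derivable F x v) ->
  {for y, continuous (fun x => 'D_v F x)} -> 0 < q ->
  exists2 del, 0 < del & forall t t' : R, `|t| <= del -> `|t'| <= del ->
   `| (F (y + t *: v) - t *: 'D_v F y) - (F (y + t' *: v) - t' *: 'D_v F y) |
     <= q * `|t - t'|.
Proof.
move=> oU Uy dF cD q0.
have phic : (fun t : R => y + t *: v) @ 0 --> y.
  have := cvgD (cvg_cst y) (@cvgZr_tmp _ _ _ (nbhs (0:R)) _ id 0 v cvg_id).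
  by rewrite scale0r addr0; apply; exact: nbhs_filter.
have N1 : \forall t \near (0:R), U (y + t *: v) by exact: (phic _ (oU _ Uy)).
have N2 : \forall t \near (0:R), `|'D_v F y - 'D_v F (y + t *: v)| < q.
  have := cvg_comp _ _ phic cD.
  by move/cvgr_dist_lt => /(_ q q0).
have [e e0 He] := (nbhs_ballP _ _).1 (filterI N1 N2).
exists (e / 2); first by rewrite divr_gt0.
have Hb (x : R) : `|x| <= e / 2 -> (U (y + x *: v) /\ `|'D_v F y - 'D_v F (y + x *: v)| < q).
  move=> Hx; apply: He; rewrite /ball /= sub0r normrN.
  by rewrite (le_lt_trans Hx) // ltr_pdivrMr // ltr_pMr // ltr1n.
pose Phi s := F (y + s *: v) - s *: 'D_v F y.
suff core a b : `|a| <= e / 2 -> `|b| <= e / 2 -> a <= b ->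
    `|Phi a - Phi b| <= q * `|a - b|.
  move=> t t' Ht Ht'.
  have [tt'|t't] := leP t t'; first exact: core.
  by rewrite distrC [`|t - t'|]distrC; apply: core => //; apply: ltW.
move=> Ha Hb' ab.
have Hab (x : R) : a <= x -> x <= b -> `|x| <= e / 2.
  move: Ha Hb'; rewrite !ler_norml => /andP[a1 a2] /andP[b1 b2] ax xb.
  by rewrite (le_trans a1 ax) (le_trans xb b2).
apply: mx_norm_leP; first by rewrite mulr_ge0 // ltW.
move=> i j.
pose psi s := F (y + s *: v) i j.
have dpsi (x : R) : a <= x -> x <= b ->
    is_derive x 1 psi ('D_v F (y + x *: v) i j).
  move=> ax xb; apply: is_derive_coord; apply: deriv_line.
  exact: dF (Hb x (Hab x ax xb)).1.
have [c cab Hc] : exists2 c, c \in `[a, b]%R &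
    psi b - psi a = ('D_v F (y + c *: v) i j) * (b - a).
  apply: MVT_segment => //.
    by move=> x; rewrite in_itv /= => /andP[ax xb]; apply: dpsi; apply: ltW.
  apply: continuous_in_subspaceT => x; rewrite inE /= in_itv /= => /andP[ax xb].
  apply: differentiable_continuous; apply/derivable1_diffP.
  by have [] := dpsi x ax xb.
move: cab; rewrite in_itv /= => /andP[ac cb].
rewrite /Phi !mxE.
move: Hc; rewrite /psi => Hc.
rewrite (_ : F (y + b *: v) i j = F (y + a *: v) i j +
   ('D_v F (y + c *: v)) i j * (b - a)); last by rewrite -Hc addrCA subrr addr0.
have key (A B C : R) : A - a * B - (A + C * (b - a) - b * B) = (B - C) * (b - a).
  by ring.
rewrite key.
rewrite normrM [`|a - b|]distrC ler_wpM2r //.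
have := (Hb c (Hab c ac cb)).2.
move/ltW; apply: le_trans.
by have := mx_coord_le _ _ ('D_v F y - 'D_v F (y + c *: v)) i j; rewrite !mxE.
Qed.
Lemma fixpt (d : nat) (T : 'rV[R]_d -> 'rV[R]_d) (del : R) : 0 < del ->
  (forall s s', `|s| <= del -> `|s'| <= del -> `|T s - T s'| <= 2^-1 * `|s - s'|) ->
  `|T 0| <= del / 2 -> exists s, `|s| <= del /\ T s = s.
Proof.
move=> d0 HL HT0.
pose U := [set s : rVc R d | `|s| <= del].
pose T' : rVc R d -> rVc R d := T.
have TU : {homo T' : s / U s >-> U s}.
  move=> s; rewrite /U /T' /= => Hs.
  have := HL s 0 Hs; rewrite normr0 => /(_ (ltW d0)).
  rewrite subr0 => H1.
  rewrite -(subrK (T 0) (T s)).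
  apply: (le_trans (ler_normD _ _)).
  rewrite [del in leRHS](splitr del) lerD //.
  apply: (le_trans H1); rewrite mulrC ler_pM2r ?invr_gt0 ?ltr0n //.
pose g := mkfun_fun TU.
have clU : closed U.
  rewrite (_ : U = (fun s => `|s|) @^-1` [set x | x <= del]) //.
  apply: closed_comp => // x _; exact: norm_continuous.
have ctr : @is_contraction _ (rVc R d) (rVc R d) U U g.
  exists (2^-1)%:nng; split => /=.
    by rewrite invf_lt1 // ltr1n.
  move=> [s s'] [/= Hs Hs']; exact: HL.
have U0 : U 0 by rewrite /U /= normr0 ltW.
have [s Us Hs] := @banach_fixed_point R (rVc R d) U g ctr clU (ex_intro _ 0 U0).
by exists s; split.
Qed.

Lemma fin_small (I : finType) (P : I -> R -> Prop) :
  (forall i, exists2 e, 0 < e & forall e', 0 < e' -> e' <= e -> P i e') ->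
  exists2 e, 0 < e & forall i, P i e.
Proof.
move=> H.
have N : \forall e \near (0:R)^'+, forall i, P i e.
  apply: filter_forall => i.
  have [E E0 HE] := H i.
  near=> e; apply: HE.
    by near: e; exact: nbhs_right_gt.
  by near: e; exact: nbhs_right_le.
have H2 := @filter_ex _ _ _ _ (filterI N (nbhs_right_gt 0)).
have [e [He e0]] := H2 (at_right_proper_filter 0) (@filter_filter R _ (at_right_proper_filter 0)).
by exists e.
Unshelve. all: by end_near.
Qed.
End S.

Section S2.
Variable R : realType.

Lemma loc_surj (k d m : nat) (F : 'I_d -> 'I_m -> 'rV[R]_k -> 'rV[R]_d)
  (U : 'I_d -> 'I_m -> set 'rV[R]_k) (y v : 'I_d -> 'I_m -> 'rV[R]_k) :
  (forall c j, open (U c j) /\ U c j (y c j) /\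
     (forall x, U c j x -> derivable (F c j) x (v c j)) /\
     {for y c j, continuous (fun x => 'D_(v c j) (F c j) x)}) ->
  (forall c, \sum_j 'D_(v c j) (F c j) (y c j) = delta_mx 0 c) ->
  exists2 r, 0 < r & forall y0, `|y0| <= r -> exists s : 'rV[R]_d,
    \sum_c \sum_j (F c j (y c j + s 0 c *: v c j) - F c j (y c j)) = y0.
Proof.
move=> Hreg Hsum.
pose q : R := ((d * m).+1 * 2)%:R^-1.
have q0 : 0 < q by rewrite invr_gt0 ltr0n muln_gt0.
pose D c j := 'D_(v c j) (F c j) (y c j).
pose Phi c j t := F c j (y c j + t *: v c j) - t *: D c j.
have [del del0 Hdel] : exists2 e, 0 < e & forall cj : 'I_d * 'I_m,
   forall t t' : R, `|t| <= e -> `|t'| <= e ->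
   `|Phi cj.1 cj.2 t - Phi cj.1 cj.2 t'| <= q * `|t - t'|.
  apply: fin_small => -[c j].
  have [oU [yU [dU cU]]] := Hreg c j.
  have [e e0 He] := @lip1 R _ _ _ _ _ _ _ oU yU dU cU q0.
  exists e => // e' e'0 e'e t t' Ht Ht'.
  by apply: He; apply: le_trans e'e.
pose G (s : 'rV[R]_d) := \sum_c \sum_j (F c j (y c j + s 0 c *: v c j) - F c j (y c j)).
have GE (s : 'rV[R]_d) : G s - s = \sum_c \sum_j (Phi c j (s 0 c) - F c j (y c j)).
  rewrite {2}(row_sum_delta s) -sumrB; apply: eq_bigr => c _.
  rewrite -Hsum scaler_sumr -sumrB; apply: eq_bigr => j _.
  by rewrite /Phi /D; rewrite addrAC.
exists (del / 2); first by rewrite divr_gt0.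
move=> y0 Hy0.
have qN : q * (d * m)%:R <= 2^-1.
  rewrite /q natrM invfM mulrAC ler_piMl //.
  by rewrite ler_pdivrMl ?ltr0n // mulr1 ler_nat.
have HL (s s' : 'rV[R]_d) : `|s| <= del -> `|s'| <= del ->
   `|(s - G s + y0) - (s' - G s' + y0)| <= 2^-1 * `|s - s'|.
  move=> Hs Hs'.
  rewrite opprD addrACA subrr addr0 -[s - G s]opprB -[s' - G s']opprB.
  rewrite -opprD normrN !GE -sumrB.
  under eq_bigr => c _ do rewrite -sumrB.
  apply: (le_trans (ler_norm_sum _ _ _)).
  apply: (@le_trans _ _ (\sum_(c < d) \sum_(j < m) (q * `|s - s'|))).
    apply: ler_sum => c _; apply: (le_trans (ler_norm_sum _ _ _)).
    apply: ler_sum => j _.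
    rewrite opprB addrA subrK.
    apply: (le_trans (Hdel (c, j) _ _ _ _)).
    - by apply: le_trans Hs; exact: mx_coord_le.
    - by apply: le_trans Hs'; exact: mx_coord_le.
    apply: ler_wpM2l; first exact: ltW q0.
    by have := mx_coord_le _ _ _ (s - s') 0 c; rewrite !mxE.
  rewrite !sumr_const !card_ord.
  rewrite -mulrnA -[_ *+ (m * d)]mulr_natr mulrAC; apply: ler_wpM2r => //.
  by rewrite mulnC.
have HT0 : `|0 - G 0 + y0| <= del / 2.
  rewrite (_ : G 0 = 0) ?subrr ?add0r //.
  rewrite /G big1 // => c _; rewrite big1 // => j _.
  by rewrite mxE scale0r addr0 subrr.
have [s [_ Hs]] := @fixpt R d (fun s => s - G s + y0) del del0 HL HT0.
exists s.
have H1 : - G s + y0 = 0.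
  by apply: (@addrI _ s); rewrite addr0 addrA.
by apply/esym/subr0_eq; rewrite addrC.
Qed.
End S2.

Section S3.
Variable R : realType.

Lemma pos_weights (d m : nat) (p : 'I_m -> 'rV[R]_d) :
  interior (conv_hull p) 0 ->
  exists lam : 'I_m -> R, (forall j, 0 < lam j) /\ \sum_j lam j = 1 /\
    \sum_j lam j *: p j = 0.
Proof.
move=> /(nbhs_ballP _ _).1 [e e0 He].
have Hb (u : 'rV[R]_d) : `|u| < e -> conv_hull p u.
  by move=> Hu; apply: He; rewrite -ball_normE /= sub0r normrN.
have m0 : (0 < m)%N.
  have [l [_ [H1 _]]] := Hb 0 ltac:(by rewrite normr0).
  case: m p He Hb l H1 => // p _ _ l; rewrite big_ord0 => /eqP.
  by rewrite eq_sym oner_eq0.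
pose b := m%:R^-1 *: \sum_j p j.
pose eps := e / (2 * (`|b| + 1)).
have eps0 : 0 < eps by rewrite divr_gt0 // mulr_gt0 // ltr_wpDl.
have [l [l0 [l1 lu]]] : conv_hull p (- (eps *: b)).
  apply: Hb; rewrite normrN normrZ gtr0_norm //.
  rewrite /eps -mulrA gtr_pMr // mulrC ltr_pdivrMr ?mulr_gt0 ?ltr_wpDl // mul1r.
  have := normr_ge0 b; lra.
have m0' : 0 < m%:R :> R by rewrite ltr0n.
exists (fun j => (l j + eps / m%:R) / (1 + eps)); split; [|split].
- by move=> j; rewrite divr_gt0 // ?ltr_wpDl // ?divr_gt0 // addr_gt0.
- rewrite -mulr_suml big_split /= l1 sumr_const card_ord -[_ *+ m]mulr_natr.
  by rewrite divfK ?gt_eqF // divff // gt_eqF // addr_gt0.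
- under eq_bigr => j _ do rewrite mulrC -scalerA scalerDl.
  rewrite -scaler_sumr big_split /= -lu -scaler_sumr.
  by rewrite -[(eps / m%:R) *: _]scalerA -/b addNr scaler0.
Qed.
End S3.

Lemma sum_nseq (T : Type) (V : zmodType) (g : T -> V) n a :
  \sum_(q <- nseq n a) g q = g a *+ n.
Proof. by elim: n => [|n IH]; rewrite ?big_nil //= big_cons IH mulrS. Qed.

Lemma sum_flat_nseq (T : Type) (V : zmodType) (g : T -> V) (I : finType)
  (cnt : I -> nat) (pt : I -> T) :
  \sum_(q <- flatten [seq nseq (cnt i) (pt i) | i <- enum I]) g q =
  \sum_i g (pt i) *+ cnt i.
Proof.
rewrite big_flatten big_map big_enum /=.
by apply: eq_bigr => i _; rewrite sum_nseq.
Qed.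

Lemma size_flat_nseq (T : Type) (I : finType) (cnt : I -> nat) (pt : I -> T) :
  size (flatten [seq nseq (cnt i) (pt i) | i <- enum I]) = (\sum_i cnt i)%N.
Proof.
rewrite size_flatten sumnE /shape -map_comp big_map big_enum /=.
by apply: eq_bigr => i _; rewrite /= size_nseq.
Qed.

Lemma sum_map_enum (T : Type) (V : zmodType) (g : T -> V) (m : nat) (x : 'I_m -> T) :
  \sum_(q <- [seq x j | j <- enum 'I_m]) g q = \sum_j g (x j).
Proof. by rewrite big_map big_enum. Qed.

Lemma zmod_aux (V : zmodType) (P A Q : V) : P + (-(A + P + Q) + Q + A) = 0.
Proof. by rewrite !opprD subrK addrAC addNr add0r subrr. Qed.

Theorem theorem2p10 (R : realType) (d k : nat) (M : topologicalType)
  (A : smooth_manifold R M k) (f : M -> 'rV[R]_d) (m : nat) (x : 'I_m -> M) :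
  smooth_map A f ->
  interior (conv_hull (fun i => f (x i))) 0 ->
  dimages_span A f x ->
  exists N : nat, forall n : nat, (N <= n)%N ->
    exists z : 'I_n -> M, \sum_(i < n) f (z i) = 0 /\ dimages_span A f z.
Proof.
move=> sm int sp.
have [lam [lam0 [lam1 lamp]]] := @pos_weights R d m _ int.
have m0 : (0 < m)%N.
  by case: m x lam lam0 lam1 {sp int lamp} => // ? ? ?; rewrite big_ord0 => /eqP; rewrite eq_sym oner_eq0.
pose j0 : 'I_m := Ordinal m0.
have [ws Hws] := choice (fun c : 'I_d => sp (delta_mx 0 c)).
have Hc : forall cj : 'I_d * 'I_m, exists pr : chart_idx A * 'rV[R]_k,
   chart_dom pr.1 (x cj.2) /\
     ws cj.1 cj.2 = 'D_(pr.2) (f \o chart_inv pr.1) (chart pr.1 (x cj.2)).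
  move=> -[c j].
  have [ch [dom [v ->]]] := (Hws c).1 j.
  by exists (ch, v).
have [chv Hchv] := choice Hc.
pose ch c j := (chv (c, j)).1.
pose v c j := (chv (c, j)).2.
pose F c j := f \o chart_inv (ch c j).
pose y c j := chart (ch c j) (x j).
have H1 : forall c j, open (chart (ch c j) @` chart_dom (ch c j)) /\
    (chart (ch c j) @` chart_dom (ch c j)) (y c j) /\
     (forall z, (chart (ch c j) @` chart_dom (ch c j)) z -> derivable (F c j) z (v c j)) /\
     {for y c j, continuous (fun z => 'D_(v c j) (F c j) z)}.
  move=> c j; have [sm1 sm2] := sm (ch c j).
  have Uy : (chart (ch c j) @` chart_dom (ch c j)) (y c j).
    by exists (x j) => //; exact: (Hchv (c, j)).1.
  split => //; split => //; split.
    by move=> z Uz; exact: ((sm2 [::] z Uz).2 (v c j)).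
  exact: (sm2 [:: v c j] _ Uy).1.
have H2 : forall c, \sum_j 'D_(v c j) (F c j) (y c j) = delta_mx 0 c.
  move=> c; rewrite (Hws c).2; apply: eq_bigr => j _.
  by rewrite (Hchv (c, j)).2.
have [r r0 Hr] := @loc_surj R k d m F _ y v H1 H2.
pose p j := f (x j).
pose Bn : R := (m.+1)%:R * \sum_j `|p j|.
have Bn0 : 0 <= Bn by rewrite mulr_ge0 // sumr_ge0.
pose K : nat := (Num.truncn (Bn / r)).+1.
have KB : Bn <= K%:R * r.
  rewrite -ler_pdivrMr //; apply: ltW; exact: truncnS_gt.
pose T0 : nat := (1 + d * K)%N.
pose N0 : nat := (\sum_j (Num.truncn (T0%:R / lam j)).+1)%N.
exists N0 => n Hn.
have HnT j : T0%:R <= n%:R * lam j.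
  rewrite -ler_pdivrMr //; apply: ltW; apply: (lt_le_trans (truncnS_gt _)).
  rewrite ler_nat; apply: leq_trans Hn.
  by rewrite /N0 (bigD1 j) //= leq_addr.
pose tr j := Num.truncn (n%:R * lam j).
have nl0 j : 0 <= n%:R * lam j by rewrite mulr_ge0 // ltW.
have trT j : (T0 <= tr j)%N by rewrite /tr truncn_ge_nat.
have trle j : (tr j)%:R <= n%:R * lam j by rewrite truncn_le.
have trgt j : n%:R * lam j < (tr j).+1%:R by exact: truncnS_gt.
have sumnl : \sum_j n%:R * lam j = n%:R :> R by rewrite -mulr_sumr lam1 mulr1.
have Str : (\sum_j tr j <= n)%N.
  rewrite -(ler_nat R) natr_sum -sumnl; exact: ler_sum.
pose L := (n - \sum_j tr j)%N.
have Lm : L%:R <= m%:R :> R.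
  rewrite /L natrB // natr_sum.
  have : n%:R <= \sum_j (tr j)%:R + m%:R :> R.
    have E1 : m%:R = \sum_(j < m) (1:R) by rewrite sumr_const card_ord.
    by rewrite -sumnl E1 -big_split; apply: ler_sum => j _ /=; rewrite natr1; apply: ltW.
  lra.
pose Nj j := (tr j + (j == j0) * L)%N.
have SN : (\sum_j Nj j)%N = n.
  have SL : (\sum_j (j == j0) * L)%N = L.
    by rewrite (bigD1 j0) //= mul1n big1 ?addn0 // => j /negbTE ->.
  by rewrite big_split /= SL /L subnKC.
pose a j := (Nj j - T0)%N.
have NjE j : Nj j = (a j + T0)%N by rewrite subnK // (leq_trans (trT j)) // leq_addr.
pose Esum := \sum_j p j *+ Nj j.
have Es : Esum = \sum_j ((Nj j)%:R - n%:R * lam j) *: p j.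
  under eq_bigr => j _ do rewrite scalerBl.
  rewrite sumrB.
  under [X in _ - X]eq_bigr => j _ do rewrite -scalerA.
  rewrite -scaler_sumr lamp scaler0 subr0 /Esum.
  by apply: eq_bigr => j _; rewrite scaler_nat.
have Ebound : `|Esum| <= Bn.
  rewrite Es; apply: le_trans (ler_norm_sum _ _ _) _.
  rewrite /Bn mulr_sumr; apply: ler_sum => j _; rewrite normrZ ler_wpM2r //.
  have h1 := trle j; have h2 := trgt j.
  have hb : (0 <= ((j == j0) * L)%:R :> R) && (((j == j0) * L)%:R <= m%:R :> R).
    by case: (j == j0); rewrite ?mul1n ?mul0n ?Lm ?lexx // ler0n.
  move: hb h2; rewrite /Nj natrD -!natr1 => /andP[hb1 hb2] h2.
  rewrite ler_norml; apply/andP; split; lra.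
pose y0 := - (K%:R^-1 *: Esum).
have K0 : 0 < K%:R :> R by rewrite ltr0n.
have Hy0 : `|y0| <= r.
  rewrite normrN normrZ normfV gtr0_norm // mulrC ler_pdivrMr //.
  by rewrite (le_trans Ebound) // mulrC.
have [s Hs] := Hr y0 Hy0.
pose pts c j := chart_inv (ch c j) (y c j + s 0 c *: v c j).
pose L1 := [seq x j | j <- enum 'I_m].
pose L2 := flatten [seq nseq K (pts cj.1 cj.2) | cj <- enum {: 'I_d * 'I_m}].
pose L3 := flatten [seq nseq (a j) (x j) | j <- enum 'I_m].
pose Ls := L1 ++ L2 ++ L3.
have Sa : (\sum_j a j + m * T0)%N = n.
  rewrite -SN (eq_bigr _ (fun j _ => NjE j)) big_split /=.
  by rewrite big_const_ord iter_addn_0 mulnC.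
have sizeLs : size Ls = n.
  rewrite !size_cat size_map size_enum_ord !size_flat_nseq.
  rewrite sum_nat_const card_prod !card_ord -Sa /T0; lia.
pose P := \sum_j p j.
pose Aa := \sum_j p j *+ a j.
have EE : Esum = Aa + P + P *+ d *+ K.
  rewrite /Esum (eq_bigr _ (fun j _ => congr1 (fun t => p j *+ t) (NjE j))).
  under eq_bigr => j _ do rewrite mulrnDr.
  rewrite big_split /= -/Aa sumrMnl -/P /T0 mulrnDr mulr1n mulrnA addrA.
  done.
have Ey0 : y0 *+ K = - Esum.
  rewrite /y0 mulNrn -scaler_nat scalerA mulfV ?scale1r //.
  by rewrite gt_eqF.
have Hs' : \sum_c \sum_j f (pts c j) = y0 + P *+ d.
  have Pd : P *+ d = \sum_(c < d) P by rewrite sumr_const card_ord.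
  rewrite -Hs Pd -big_split /=.
  apply: eq_bigr => c _; rewrite /P -big_split /=; apply: eq_bigr => j _.
  by rewrite /F /y /= chartK ?subrK //; exact: (Hchv (c, j)).1.
have sumLs : \sum_(q <- Ls) f q = 0.
  rewrite !big_cat /= sum_map_enum !sum_flat_nseq.
  rewrite sumrMnl -(pair_big xpredT xpredT (fun c j => f (pts c j))) /=.
  rewrite Hs' -/P -/Aa mulrnDl Ey0 EE.
  exact: zmod_aux.
have mn : (m <= n)%N by rewrite -sizeLs size_cat size_map size_enum_ord leq_addr.
exists (fun i : 'I_n => nth (x j0) Ls i); split.
  rewrite -[RHS]sumLs (big_nth (x j0)) sizeLs big_mkord //.
move=> w; have [wsx [Hwx ->]] := sp w.
exists (fun i : 'I_n => if (insub (val i) : option 'I_m) is Some j then wsx j else 0).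
split.
  move=> i; case: insubP => [j _ ej | _].
    have -> : nth (x j0) Ls i = x j.
      rewrite -ej nth_cat size_map size_enum_ord ltn_ord (nth_map j0) ?size_enum_ord //.
      by rewrite nth_ord_enum.
      exact: ltn_ord.
    exact: Hwx j.
  have [c Hcc] := chart_cover A (nth (x j0) Ls i).
  exists c; split => //; exists 0; by rewrite derive0.
pose G (k : nat) := if (insub k : option 'I_m) is Some j then wsx j else 0.
rewrite (_ : \sum_(i < n) _ = \sum_(i < n) G i) //.
rewrite (bigID (fun i : 'I_n => (i < m)%N)) /= [X in _ + X]big1 ?addr0; last first.
  by move=> i /negbTE hi; rewrite /G insubF.
rewrite -(big_ord_widen _ G mn); apply: eq_bigr => i _.
by rewrite /G valK.
Qed.
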